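(* Let $n\ge 2$, $h=1/n$, $\Omega=(0,1)^2$, $f$ continuous on $[0,1]^2$, $g\in H^{1/2}(\partial\Omega)$. (i) For every $\kappa>0$, the seven-point finite difference scheme described in the context has exactly one solution $\{u_{k,\ell}\}$. (ii) The five-point scheme described in the context has exactly one solution. (iii) If in addition $f\le 0$ in $\Omega$, then for every $0<\kappa\le 4$ the solution of the seven-point scheme (and in particular the solution of the five-point scheme) satisfies $\max_{(x_k,y_\ell)\in\Omega_h}u_{k,\ell}\le\max_{(x_k,y_\ell)\in\partial\Omega_h}Q_bg(x_k,y_\ell)$, where $\Omega_h$ is the set of all grid points and $\partial\Omega_h$ the set of boundary grid points.
   Context: Grid: $x_k=(k-\frac12)h$, $y_\ell=(\ell-\frac12)h$ for $k,\ell\in\{\frac12,1,\frac32,\dots,n+\frac12\}$. Grid points are $(x_k,y_\ell)$ with one index an integer in $\{1,\dots,n\}$ and the other a half-integer in $\{\frac12,\dots,n+\frac12\}$ (midpoints of the edges of the uniform square partition); a grid point is a boundary grid point if its half-integer index is $\frac12$ or $n+\frac12$. $Q_bg$ at a boundary grid point is the average of $g$ over the boundary edge of length $h$ centered at that point. Seven-point scheme (parameter $\kappa>0$): unknowns $u_{k,\ell}$ at all grid points with $u_{k,\ell}=Q_bg(x_k,y_\ell)$ at boundary grid points, and $c_1u_{i+\frac32,j}+c_2u_{i+\frac12,j}+c_3u_{i-\frac12,j}+c_4(u_{i+1,j-\frac12}+u_{i+1,j+\frac12}+u_{i,j-\frac12}+u_{i,j+\frac12})=\frac{h^2}{2}f(x_{i+\frac12},y_j)$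 for $i\in\{1,\dots,n-1\}$, $j\in\{1,\dots,n\}$, $c_1u_{i,j+\frac32}+c_2u_{i,j+\frac12}+c_3u_{i,j-\frac12}+c_4(u_{i-\frac12,j+1}+u_{i+\frac12,j+1}+u_{i-\frac12,j}+u_{i+\frac12,j})=\frac{h^2}{2}f(x_i,y_{j+\frac12})$ for $i\in\{1,\dots,n\}$, $j\in\{1,\dots,n-1\}$, with $c_1=c_3=\frac{\kappa}{4}-1$, $c_2=\frac{\kappa}{2}+2$, $c_4=-\frac{\kappa}{4}$. Five-point scheme: the case $\kappa=4$, i.e. the same boundary condition and $\frac{4u_{i+\frac12,j}-u_{i+1,j-\frac12}-u_{i+1,j+\frac12}-u_{i,j-\frac12}-u_{i,j+\frac12}}{h^2}=\frac12f(x_{i+\frac12},y_j)$, $\frac{4u_{i,j+\frac12}-u_{i-\frac12,j+1}-u_{i+\frac12,j+1}-u_{i-\frac12,j}-u_{i+\frac12,j}}{h^2}=\frac12f(x_i,y_{j+\frac12})$ for the same index ranges. *)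

(* Defs.v *)
From HB Require Import structures.
From mathcomp Require Import all_boot all_order all_algebra.
From mathcomp Require Import all_classical all_reals all_analysis.
Set Implicit Arguments. Unset Strict Implicit. Unset Printing Implicit Defensive.
Import Order.TTheory GRing.Theory Num.Theory.
Import numFieldNormedType.Exports.
Local Open Scope classical_set_scope.
Local Open Scope ring_scope.

(* CONVENTION: grid indices are DOUBLED.  A paper index k in {1/2,1,...,n+1/2}
   is represented by the natural number K = 2k in {1,...,2n+1}.  Integer
   paper indices correspond to even K, half-integer ones to odd K. *)

Section Grid.
Variable R : realType.
Variable n : nat.

Definition hh : R := n%:R^-1.

Definition coord (K : nat) : R := (K%:R / 2 - 2^-1) * hh.

Definition int_idx (K : nat) : bool := [&& ~~ odd K, (2 <= K)%N & (K <= n.*2)%N].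
Definition half_idx (K : nat) : bool := [&& odd K, (1 <= K)%N & (K <= n.*2.+1)%N].

Definition is_grid (K L : nat) : bool :=
  (int_idx K && half_idx L) || (half_idx K && int_idx L).

Definition is_bnd (K L : nat) : bool :=
  (int_idx K && ((L == 1%N) || (L == n.*2.+1)))
  || (int_idx L && ((K == 1%N) || (K == n.*2.+1))).

Definition idx_range : seq nat := iota 0 (n.*2.+2).
Definition grid_pts : seq (nat * nat) :=
  [seq p <- [seq (a, b) | a <- idx_range, b <- idx_range] | is_grid p.1 p.2].
Definition bnd_pts : seq (nat * nat) :=
  [seq p <- [seq (a, b) | a <- idx_range, b <- idx_range] | is_bnd p.1 p.2].

(* average of F over [a, b] (Lebesgue integral), divided by h = b - a *)
Definition edge_avg (a b : R) (F : R -> R) : R :=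
  fine (\int[@lebesgue_measure R]_(s in `[a, b]) (F s)%:E) / hh.

(* Q_b g at a boundary grid point (K, L): average of g over the boundary edge
   of length h centered at (x_K, y_L).  g is given as a function on the plane;
   only its values on the boundary of the unit square are used. *)
Definition Qb (g : R -> R -> R) (K L : nat) : R :=
  if L == 1%N then
    edge_avg (coord K - hh / 2) (coord K + hh / 2) (fun s => g s 0)
  else if L == n.*2.+1 then
    edge_avg (coord K - hh / 2) (coord K + hh / 2) (fun s => g s 1)
  else if K == 1%N then
    edge_avg (coord L - hh / 2) (coord L + hh / 2) (fun s => g 0 s)
  else
    edge_avg (coord L - hh / 2) (coord L + hh / 2) (fun s => g 1 s).

(* Seven-point scheme with parameter kappa.  u K L is u_{K/2, L/2}. *)
Definition c1 (kappa : R) : R := kappa / 4 - 1.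
Definition c2 (kappa : R) : R := kappa / 2 + 2.
Definition c3 (kappa : R) : R := kappa / 4 - 1.
Definition c4 (kappa : R) : R := - (kappa / 4).

Definition bc_holds (g : R -> R -> R) (u : nat -> nat -> R) : Prop :=
  forall K L, is_bnd K L -> u K L = Qb g K L.

Definition seven_point (kappa : R) (f g : R -> R -> R) (u : nat -> nat -> R) : Prop :=
  bc_holds g u /\
  (* first family: i in {1..n-1}, j in {1..n}; point (i+1/2, j) *)
  (forall i j, (1 <= i <= n.-1)%N -> (1 <= j <= n)%N ->
     c1 kappa * u (i.*2 + 3)%N j.*2 + c2 kappa * u i.*2.+1 j.*2
     + c3 kappa * u i.*2.-1 j.*2
     + c4 kappa * (u i.*2.+2 j.*2.-1 + u i.*2.+2 j.*2.+1
                   + u i.*2 j.*2.-1 + u i.*2 j.*2.+1)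
     = hh ^+ 2 / 2 * f (coord i.*2.+1) (coord j.*2)) /\
  (* second family: i in {1..n}, j in {1..n-1}; point (i, j+1/2) *)
  (forall i j, (1 <= i <= n)%N -> (1 <= j <= n.-1)%N ->
     c1 kappa * u i.*2 (j.*2 + 3)%N + c2 kappa * u i.*2 j.*2.+1
     + c3 kappa * u i.*2 j.*2.-1
     + c4 kappa * (u i.*2.-1 j.*2.+2 + u i.*2.+1 j.*2.+2
                   + u i.*2.-1 j.*2 + u i.*2.+1 j.*2)
     = hh ^+ 2 / 2 * f (coord i.*2) (coord j.*2.+1)).

Definition five_point (f g : R -> R -> R) (u : nat -> nat -> R) : Prop :=
  bc_holds g u /\
  (forall i j, (1 <= i <= n.-1)%N -> (1 <= j <= n)%N ->
     (4 * u i.*2.+1 j.*2 - u i.*2.+2 j.*2.-1 - u i.*2.+2 j.*2.+1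
      - u i.*2 j.*2.-1 - u i.*2 j.*2.+1) / hh ^+ 2
     = 2^-1 * f (coord i.*2.+1) (coord j.*2)) /\
  (forall i j, (1 <= i <= n)%N -> (1 <= j <= n.-1)%N ->
     (4 * u i.*2 j.*2.+1 - u i.*2.-1 j.*2.+2 - u i.*2.+1 j.*2.+2
      - u i.*2.-1 j.*2 - u i.*2.+1 j.*2) / hh ^+ 2
     = 2^-1 * f (coord i.*2) (coord j.*2.+1)).

(* "exactly one solution": a solution exists, and any two solutions agree at
   every grid point (the unknowns are only the values at grid points). *)
Definition unique_grid_sol (S : (nat -> nat -> R) -> Prop) : Prop :=
  exists u, S u /\ forall v, S v -> forall K L, is_grid K L -> v K L = u K L.

(* max over all grid points of u, and max over boundary grid points of Q_b g
   ((2,1) is the boundary grid point (x_1, y_{1/2}), used as seed). *)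
Definition max_grid (u : nat -> nat -> R) : R :=
  \big[Num.max/u 2%N 1%N]_(p <- grid_pts) u p.1 p.2.
Definition max_bnd (g : R -> R -> R) : R :=
  \big[Num.max/Qb g 2%N 1%N]_(p <- bnd_pts) Qb g p.1 p.2.

End Grid.

Definition unit_square {R : realType} : set (R * R) :=
  [set p | 0 <= p.1 <= 1 /\ 0 <= p.2 <= 1].

(* Main.v *)
Require Import Defs.
From HB Require Import structures.
From mathcomp Require Import all_boot all_order all_algebra.
From mathcomp Require Import all_classical all_reals all_analysis.
From mathcomp Require Import ring lra zify.
Import Order.TTheory GRing.Theory Num.Theory.
Import numFieldNormedType.Exports.
Local Open Scope ring_scope.

Section Energy.
Variable R : realType.

Lemma sbp (N : nat) (x y : nat -> R) : x 0%N * y 0%N = 0 -> x N = 0 ->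
  \sum_(p < N.+1) y p * (x p.-1 + x p) = \sum_(i < N.+1) x i * (y i + y i.+1).
Proof.
move=> h0 hN.
have -> : \sum_(p < N.+1) y p * (x p.-1 + x p) =
   \sum_(p < N.+1) y p * x p.-1 + \sum_(p < N.+1) y p * x p.
  by rewrite -big_split /=; apply: eq_bigr => i _; rewrite mulrDr.
have -> : \sum_(i < N.+1) x i * (y i + y i.+1) =
   \sum_(i < N.+1) x i * y i + \sum_(i < N.+1) x i * y i.+1.
  by rewrite -big_split /=; apply: eq_bigr => i _; rewrite mulrDr.
rewrite big_ord_recl /= [X in _ = _ + X]big_ord_recr /= hN mul0r addr0.
rewrite mulrC h0 add0r addrC; congr (_ + _).
  by apply: eq_bigr => i _; rewrite mulrC.
by apply: eq_bigr => i _; rewrite mulrC.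
Qed.

Lemma lap1 (N : nat) (x : nat -> R) : x 0%N = 0 -> x N = 0 ->
  \sum_(i < N.+1) x i * (2 * x i - x i.-1 - x i.+1) = \sum_(i < N) (x i.+1 - x i)^+2.
Proof.
move=> h0 hN.
have -> : \sum_(i < N.+1) x i * (2 * x i - x i.-1 - x i.+1) =
   \sum_(i < N.+1) x i * (x i - x i.-1) + \sum_(i < N.+1) x i * (x i - x i.+1).
  by rewrite -big_split /=; apply: eq_bigr => i _; ring.
rewrite big_ord_recl /= h0 mul0r add0r big_ord_recr /= hN mul0r addr0 -big_split /=.
by apply: eq_bigr => i _; ring.
Qed.

Lemma energy (N : nat) (k : R) (a b : nat -> nat -> R) :
  0 < k ->
  (forall j, a 0%N j = 0) -> (forall j, a N j = 0) ->
  (forall i, b i 0%N = 0) -> (forall i, b i N = 0) ->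
  let s p q := a p.-1 q + a p q - b p q.-1 - b p q in
  (forall i j, (i < N.+1)%N -> (j < N.+1)%N ->
     a i j * (k / 4 * (s i j + s i.+1 j) + (2 * a i j - a i.-1 j - a i.+1 j)) = 0) ->
  (forall i j, (i < N.+1)%N -> (j < N.+1)%N ->
     b i j * (- (k / 4) * (s i j + s i j.+1) + (2 * b i j - b i j.-1 - b i j.+1)) = 0) ->
  forall i j, (i < N.+1)%N -> (j < N.+1)%N -> a i j = 0 /\ b i j = 0.
Proof.
move=> k0 a0 aN b0 bN s hA hB.
set S := \sum_(p < N.+1) \sum_(q < N.+1) s p q ^+ 2.
set L1 := \sum_(j < N.+1) \sum_(i < N) (a i.+1 j - a i j) ^+ 2.
set L2 := \sum_(i < N.+1) \sum_(j < N) (b i j.+1 - b i j) ^+ 2.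
have E0 : \sum_(i < N.+1) \sum_(j < N.+1)
   (a i j * (k / 4 * (s i j + s i.+1 j) + (2 * a i j - a i.-1 j - a i.+1 j))
  + b i j * (- (k / 4) * (s i j + s i j.+1) + (2 * b i j - b i j.-1 - b i j.+1))) = 0.
  by apply: big1 => i _; apply: big1 => j _; rewrite hA // hB // addr0.
have ES : S = \sum_(i < N.+1) \sum_(j < N.+1) (a i j * (s i j + s i.+1 j))
            - \sum_(i < N.+1) \sum_(j < N.+1) (b i j * (s i j + s i j.+1)).
  have -> : S = \sum_(p < N.+1) \sum_(q < N.+1) s p q * (a p.-1 q + a p q)
              - \sum_(p < N.+1) \sum_(q < N.+1) s p q * (b p q.-1 + b p q).
    rewrite -sumrB; apply: eq_bigr => p _; rewrite -sumrB; apply: eq_bigr => q _.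
    rewrite /s; ring.
  congr (_ - _).
    rewrite exchange_big [RHS]exchange_big /=; apply: eq_bigr => q _.
    by apply: (@sbp N (fun p => a p q) (fun p => s p q)); rewrite /= ?a0 ?mul0r ?aN.
  apply: eq_bigr => p _.
  by apply: (@sbp N (fun q => b p q) (fun q => s p q)); rewrite /= ?b0 ?mul0r ?bN.
have EL1 : L1 = \sum_(i < N.+1) \sum_(j < N.+1) a i j * (2 * a i j - a i.-1 j - a i.+1 j).
  rewrite exchange_big /=; apply: eq_bigr => j _.
  by rewrite (@lap1 N (fun i => a i j)).
have EL2 : L2 = \sum_(i < N.+1) \sum_(j < N.+1) b i j * (2 * b i j - b i j.-1 - b i j.+1).
  apply: eq_bigr => i _.
  by rewrite (@lap1 N (fun j => b i j)).
have Etot : k / 4 * S + L1 + L2 = 0.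
  rewrite -E0 ES EL1 EL2 mulrBr !mulr_sumr -!sumrB -!big_split /=.
  apply: eq_bigr => i _; rewrite !mulr_sumr -!sumrB -!big_split /=.
  apply: eq_bigr => j _; ring.
have S0 : 0 <= S by apply: sumr_ge0 => p _; apply: sumr_ge0 => q _; apply: sqr_ge0.
have L10 : 0 <= L1 by apply: sumr_ge0 => p _; apply: sumr_ge0 => q _; apply: sqr_ge0.
have L20 : 0 <= L2 by apply: sumr_ge0 => p _; apply: sumr_ge0 => q _; apply: sqr_ge0.
have kS : 0 <= k / 4 * S by apply: mulr_ge0 => //; apply: divr_ge0; lra.
have L1z : L1 = 0 by lra.
have L2z : L2 = 0 by lra.
have Ha : forall j, (j < N.+1)%N -> forall i, (i < N)%N -> a i.+1 j = a i j.
  move=> j hj i hi.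
  move/eqP: L1z; rewrite psumr_eq0; last by move=> *; apply: sumr_ge0 => *; apply: sqr_ge0.
  move/allP/(_ (Ordinal hj) (mem_index_enum _)) => /=.
  rewrite psumr_eq0; last by move=> *; apply: sqr_ge0.
  move/allP/(_ (Ordinal hi) (mem_index_enum _)) => /=.
  by rewrite sqrf_eq0 subr_eq0 => /eqP.
have Hb : forall i, (i < N.+1)%N -> forall j, (j < N)%N -> b i j.+1 = b i j.
  move=> i hi j hj.
  move/eqP: L2z; rewrite psumr_eq0; last by move=> *; apply: sumr_ge0 => *; apply: sqr_ge0.
  move/allP/(_ (Ordinal hi) (mem_index_enum _)) => /=.
  rewrite psumr_eq0; last by move=> *; apply: sqr_ge0.
  move/allP/(_ (Ordinal hj) (mem_index_enum _)) => /=.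
  by rewrite sqrf_eq0 subr_eq0 => /eqP.
move=> i j hi hj; split.
  elim: i hi => [|i IH] hi; first by rewrite a0.
  by rewrite Ha // IH // ltnW.
elim: j hj => [|j IH] hj; first by rewrite b0.
by rewrite Hb // IH // ltnW.
Qed.

End Energy.

Lemma inj_surj (F : fieldType) (p q : nat) (Phi : {linear 'M[F]_(p, q) -> 'M[F]_(p, q)}) :
  (forall X, Phi X = 0 -> X = 0) -> forall B, exists X, Phi X = B.
Proof.
move=> inj B.
set A := lin_mx Phi.
have kerA : forall v : 'rV_(p * q), v *m A = 0 -> v = 0.
  move=> v hv.
  have : mxvec (Phi (vec_mx v)) = 0 by rewrite -mul_vec_lin vec_mxK.
  move=> /(congr1 vec_mx); rewrite mxvecK linear0 => /inj h.
  by rewrite -[v]vec_mxK h linear0.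
have uA : A \in unitmx.
  rewrite -row_free_unit -kermx_eq0; apply/eqP/row_matrixP => i.
  rewrite row0; apply: kerA; apply/sub_kermxP; exact: row_sub.
exists (vec_mx (mxvec B *m invmx A)).
apply: (can_inj mxvecK).
by rewrite -mul_vec_lin vec_mxK mulmxKV.
Qed.

Section Scheme.
Variables (R : realType) (n : nat).

Definition intA (K L : nat) : bool :=
  [&& odd K, (3 <= K)%N, (K < n.*2)%N, ~~ odd L, (2 <= L)%N & (L <= n.*2)%N].
Definition intB (K L : nat) : bool :=
  [&& ~~ odd K, (2 <= K)%N, (K <= n.*2)%N, odd L, (3 <= L)%N & (L < n.*2)%N].

Definition opA (k : R) (w : nat -> nat -> R) (i j : nat) : R :=
  c1 k * w (i.*2 + 3)%N j.*2 + c2 k * w i.*2.+1 j.*2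
     + c3 k * w i.*2.-1 j.*2
     + c4 k * (w i.*2.+2 j.*2.-1 + w i.*2.+2 j.*2.+1
                   + w i.*2 j.*2.-1 + w i.*2 j.*2.+1).
Definition opB (k : R) (w : nat -> nat -> R) (i j : nat) : R :=
  c1 k * w i.*2 (j.*2 + 3)%N + c2 k * w i.*2 j.*2.+1
     + c3 k * w i.*2 j.*2.-1
     + c4 k * (w i.*2.-1 j.*2.+2 + w i.*2.+1 j.*2.+2
                   + w i.*2.-1 j.*2 + w i.*2.+1 j.*2).

Definition op (k : R) (w : nat -> nat -> R) (K L : nat) : R :=
  if intA K L then opA k w K./2 L./2
  else if intB K L then opB k w K./2 L./2
  else w K L.

Lemma op_lin k a w1 w2 K L :
  op k (fun K L => a * w1 K L + w2 K L) K L = a * op k w1 K L + op k w2 K L.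
Proof.
rewrite /op /opA /opB; case: ifP => _; first ring.
case: ifP => _; first ring. by [].
Qed.

Lemma op_scale k a w K L :
  op k (fun K L => a * w K L) K L = a * op k w K L.
Proof.
rewrite /op /opA /opB; case: ifP => _; first ring.
case: ifP => _; first ring. by [].
Qed.

Lemma op_add k w1 w2 K L :
  op k (fun K L => w1 K L + w2 K L) K L = op k w1 K L + op k w2 K L.
Proof.
rewrite /op /opA /opB; case: ifP => _; first ring.
case: ifP => _; first ring. by [].
Qed.

Lemma hom_zero (k : R) (w : nat -> nat -> R) : 0 < k ->
  (forall K L, ~~ (intA K L || intB K L) -> w K L = 0) ->
  (forall K L, intA K L || intB K L -> op k w K L = 0) ->
  forall K L, w K L = 0.
Proof.
move=> k0 wz wop.
pose a i j := w i.*2.+1 j.*2.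
pose b i j := w i.*2 j.*2.+1.
have za : forall i j, ~~ [&& (1 <= i)%N, (i < n)%N, (1 <= j)%N & (j <= n)%N] -> a i j = 0.
  move=> i j h; apply: wz; rewrite /intA /intB; lia.
have zb : forall i j, ~~ [&& (1 <= i)%N, (i <= n)%N, (1 <= j)%N & (j < n)%N] -> b i j = 0.
  move=> i j h; apply: wz; rewrite /intA /intB; lia.
have E := @energy R n.+1 k a b k0.
have a0 : forall j, a 0%N j = 0 by move=> j; apply: za; lia.
have aN : forall j, a n.+1 j = 0 by move=> j; apply: za; lia.
have b0 : forall i, b i 0%N = 0 by move=> i; apply: zb; lia.
have bN : forall i, b i n.+1 = 0 by move=> i; apply: zb; lia.
have {E} := E a0 aN b0 bN.
set s := fun p q => _.
move=> E.
have hA : forall i j, (i < n.+2)%N -> (j < n.+2)%N ->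
     a i j * (k / 4 * (s i j + s i.+1 j) + (2 * a i j - a i.-1 j - a i.+1 j)) = 0.
  move=> i j _ _.
  case/boolP: [&& (1 <= i)%N, (i < n)%N, (1 <= j)%N & (j <= n)%N] => hij; last first.
    by rewrite za // mul0r.
  have hA : intA i.*2.+1 j.*2 by rewrite /intA; lia.
  have h0 : opA k w i j = 0.
    have := wop (i.*2.+1) (j.*2); rewrite /op hA.
    have -> : (i.*2.+1)./2 = i by lia.
    have -> : (j.*2)./2 = j by lia.
    by apply.
  suff -> : k / 4 * (s i j + s i.+1 j) + (2 * a i j - a i.-1 j - a i.+1 j) = opA k w i j.
    by rewrite h0 mulr0.
  rewrite /s /a /b /opA /c1 /c2 /c3 /c4 /=.
  have -> : (i.+1).*2.+1 = (i.*2 + 3)%N by lia.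
  have -> : (i.-1).*2.+1 = i.*2.-1 by lia.
  have -> : (i.+1).*2 = i.*2.+2 by lia.
  have -> : (j.-1).*2.+1 = j.*2.-1 by lia.
  by field.
have hB : forall i j, (i < n.+2)%N -> (j < n.+2)%N ->
     b i j * (- (k / 4) * (s i j + s i j.+1) + (2 * b i j - b i j.-1 - b i j.+1)) = 0.
  move=> i j _ _.
  case/boolP: [&& (1 <= i)%N, (i <= n)%N, (1 <= j)%N & (j < n)%N] => hij; last first.
    by rewrite zb // mul0r.
  have hA' : intA i.*2 j.*2.+1 = false by rewrite /intA; lia.
  have hB' : intB i.*2 j.*2.+1 by rewrite /intB; lia.
  have h0 : opB k w i j = 0.
    have := wop (i.*2) (j.*2.+1); rewrite /op hA' hB'.
    have -> : (j.*2.+1)./2 = j by lia.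
    have -> : (i.*2)./2 = i by lia.
    by rewrite orbT; apply.
  suff -> : - (k / 4) * (s i j + s i j.+1) + (2 * b i j - b i j.-1 - b i j.+1) = opB k w i j.
    by rewrite h0 mulr0.
  rewrite /s /a /b /opB /c1 /c2 /c3 /c4 /=.
  have -> : (j.+1).*2.+1 = (j.*2 + 3)%N by lia.
  have -> : (i.-1).*2.+1 = i.*2.-1 by lia.
  have -> : (j.+1).*2 = j.*2.+2 by lia.
  have -> : (j.-1).*2.+1 = j.*2.-1 by lia.
  by field.
have {}E := E hA hB.
move=> K L.
case/boolP: (intA K L || intB K L) => hKL; last by apply: wz.
case/orP: hKL => hKL.
  have eK : K = (K./2).*2.+1 by move: hKL; rewrite /intA; lia.
  have eL : L = (L./2).*2 by move: hKL; rewrite /intA; lia.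
  rewrite eK eL; apply: (E _ _ _ _).1; move: hKL; rewrite /intA; lia.
have eK : K = (K./2).*2 by move: hKL; rewrite /intB; lia.
have eL : L = (L./2).*2.+1 by move: hKL; rewrite /intB; lia.
rewrite eK eL; apply: (E _ _ _ _).2; move: hKL; rewrite /intB; lia.
Qed.

Lemma op_ext k (w1 w2 : nat -> nat -> R) K L :
  (forall K L, w1 K L = w2 K L) -> op k w1 K L = op k w2 K L.
Proof. by move=> H; rewrite /op /opA /opB !H. Qed.

Definition ext (X : 'M[R]_(n.*2.+2)) (K L : nat) : R :=
  if (K < n.*2.+2)%N && (L < n.*2.+2)%N then X (inord K) (inord L) else 0.

Definition Phi (k : R) (X : 'M[R]_(n.*2.+2)) : 'M[R]_(n.*2.+2) :=
  \matrix_(i, j) op k (ext X) i j.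

Fact Phi_semilinear k : semilinear (Phi k).
Proof.
split=> [a X|X Y]; apply/matrixP => i j; rewrite !mxE.
  rewrite -op_scale; apply: op_ext => K L; rewrite /ext.
  by case: ifP => _; rewrite ?mxE ?mulr0.
rewrite -op_add; apply: op_ext => K L; rewrite /ext.
by case: ifP => _; rewrite ?mxE ?addr0.
Qed.

HB.instance Definition _ k :=
  GRing.isSemilinear.Build R 'M[R]_(n.*2.+2) 'M[R]_(n.*2.+2) _ (Phi k)
    (Phi_semilinear k).

Lemma Phi_inj k : 0 < k -> forall Y, Phi k Y = 0 -> Y = 0.
Proof.
move=> k0 Y hY.
have hz := @hom_zero k (ext Y) k0.
have E : forall K L, (K < n.*2.+2)%N -> (L < n.*2.+2)%N -> op k (ext Y) K L = 0.
  move=> K L hK hL.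
  have := congr1 (fun M : 'M[R]_(n.*2.+2) => M (inord K) (inord L)) hY.
  by rewrite /= !mxE !inordK.
have Z : forall K L, ext Y K L = 0.
  apply: hz.
    move=> K L hKL; rewrite /ext; case: ifP => // /andP [hK hL].
    have := E K L hK hL; rewrite /op.
    move: hKL; case: (intA K L) => //; case: (intB K L) => //= _.
    by rewrite /ext hK hL.
  move=> K L hKL; apply: E; move: hKL; rewrite /intA /intB; lia.
apply/matrixP => i j; rewrite mxE.
have := Z i j; rewrite /ext ltn_ord ltn_ord /=.
by rewrite !inord_val.
Qed.

Definition rhs (k : R) (f g : R -> R -> R) (K L : nat) : R :=
  if intA K L then Defs.hh R n ^+ 2 / 2 * f (Defs.coord R n (K./2).*2.+1) (Defs.coord R n (L./2).*2)
  else if intB K L then Defs.hh R n ^+ 2 / 2 * f (Defs.coord R n (K./2).*2) (Defs.coord R n (L./2).*2.+1)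
  else if is_bnd n K L then Qb n g K L else 0.

Lemma grid_cases K L : is_grid n K L -> [|| intA K L, intB K L | is_bnd n K L].
Proof. rewrite /is_grid /is_bnd /int_idx /half_idx /intA /intB; lia. Qed.

Lemma bnd_grid K L : is_bnd n K L -> is_grid n K L.
Proof. rewrite /is_grid /is_bnd /int_idx /half_idx; lia. Qed.

Lemma bnd_notint K L : is_bnd n K L -> intA K L = false /\ intB K L = false.
Proof. rewrite /is_bnd /int_idx /intA /intB; lia. Qed.

Lemma seven_of_op k f g (u : nat -> nat -> R) :
  (forall K L, op k u K L = rhs k f g K L) -> seven_point n k f g u.
Proof.
move=> H; split; [|split].
- move=> K L hb; have := H K L; rewrite /op /rhs.
  by case: (@bnd_notint K L hb) => -> ->; rewrite hb.
- move=> i j hi hj; have := H i.*2.+1 j.*2; rewrite /op /rhs.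
  have hA : intA i.*2.+1 j.*2 by rewrite /intA; lia.
  rewrite hA.
  have -> : (i.*2.+1)./2 = i by lia.
  have -> : (j.*2)./2 = j by lia.
  by [].
- move=> i j hi hj; have := H i.*2 j.*2.+1; rewrite /op /rhs.
  have hA : intA i.*2 j.*2.+1 = false by rewrite /intA; lia.
  have hB : intB i.*2 j.*2.+1 by rewrite /intB; lia.
  rewrite hA hB.
  have -> : (i.*2)./2 = i by lia.
  have -> : (j.*2.+1)./2 = j by lia.
  by [].
Qed.

Lemma op_of_seven k f g (v : nat -> nat -> R) :
  seven_point n k f g v ->
  let w := fun K L => if is_grid n K L then v K L else 0 in
  forall K L, op k w K L = rhs k f g K L.
Proof.
move=> [bc [eA eB]] w K L.
have G : forall K L, is_grid n K L -> w K L = v K L by move=> K' L' h; rewrite /w h.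
rewrite /op /rhs.
case: ifP => hA.
  have eK : K = (K./2).*2.+1 by move: hA; rewrite /intA; lia.
  have eL : L = (L./2).*2 by move: hA; rewrite /intA; lia.
  set i := K./2; set j := L./2.
  have hi : (1 <= i <= n.-1)%N by move: hA; rewrite /intA /i; lia.
  have hj : (1 <= j <= n)%N by move: hA; rewrite /intA /j; lia.
  rewrite -(eA i j hi hj) /opA.
  rewrite !G //; rewrite /is_grid /int_idx /half_idx; lia.
case: ifP => hB.
  have eK : K = (K./2).*2 by move: hB; rewrite /intB; lia.
  have eL : L = (L./2).*2.+1 by move: hB; rewrite /intB; lia.
  set i := K./2; set j := L./2.
  have hi : (1 <= i <= n)%N by move: hB; rewrite /intB /i; lia.
  have hj : (1 <= j <= n.-1)%N by move: hB; rewrite /intB /j; lia.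
  rewrite -(eB i j hi hj) /opB.
  rewrite !G //; rewrite /is_grid /int_idx /half_idx; lia.
case: ifP => hb; first by rewrite G ?bc // bnd_grid.
rewrite /w; case: ifP => // hg.
by move: (@grid_cases K L hg); rewrite hA hB hb.
Qed.

Lemma seven_unique (k : R) (f g : R -> R -> R) : 0 < k -> unique_grid_sol n (seven_point n k f g).
Proof.
move=> k0.
pose B := \matrix_(i, j) rhs k f g i j : 'M[R]_(n.*2.+2).
have [X hX] := @inj_surj R _ _ (Phi k) (@Phi_inj k k0) B.
have HX : forall K L, (K < n.*2.+2)%N -> (L < n.*2.+2)%N -> op k (ext X) K L = rhs k f g K L.
  move=> K L hK hL.
  have := congr1 (fun M : 'M[R]_(n.*2.+2) => M (inord K) (inord L)) hX.
  by rewrite /= !mxE !inordK.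
exists (ext X); split.
  apply: seven_of_op => K L.
  case/boolP: ((K < n.*2.+2)%N && (L < n.*2.+2)%N) => [/andP [hK hL]|hKL]; first exact: HX.
  rewrite /op /rhs.
  have -> : intA K L = false by move: hKL; rewrite /intA; lia.
  have -> : intB K L = false by move: hKL; rewrite /intB; lia.
  have -> : is_bnd n K L = false by move: hKL; rewrite /is_bnd /int_idx; lia.
  by rewrite /ext (negbTE hKL).
move=> v hv K L hg.
have Hw := @op_of_seven k f g v hv.
set w := fun K L => if is_grid n K L then v K L else 0.
pose Xv := \matrix_(i, j) w i j : 'M[R]_(n.*2.+2).
have ew : forall K L, ext Xv K L = w K L.
  move=> K' L'; rewrite /ext; case: ifP => [/andP [hK hL]|hKL].
    by rewrite mxE !inordK.
  rewrite /w; case: ifP => // hg'; move: hg' hKL; rewrite /is_grid /int_idx /half_idx; lia.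
have : Phi k (Xv - X) = 0.
  rewrite linearB; apply/matrixP => i j; rewrite !mxE.
  apply/eqP; rewrite subr_eq0; apply/eqP.
  rewrite (@op_ext k _ w) // Hw HX //.
move/(@Phi_inj k k0)/eqP; rewrite subr_eq0 => /eqP eX.
have hK : (K < n.*2.+2)%N by move: hg; rewrite /is_grid /int_idx /half_idx; lia.
have hL : (L < n.*2.+2)%N by move: hg; rewrite /is_grid /int_idx /half_idx; lia.
have := ew K L; rewrite /w hg => <-.
by rewrite eX.
Qed.

End Scheme.

Set Implicit Arguments. Unset Strict Implicit.

Section Max.
Variables (R : realType).

Lemma bigmax_ge (T : eqType) (s : seq T) (x0 : R) (F : T -> R) p :
  p \in s -> F p <= \big[Num.max/x0]_(q <- s) F q.
Proof.
elim: s => [|a s IH] //; rewrite in_cons big_cons => /orP [/eqP ->|hp].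
  by rewrite le_max lexx.
by rewrite le_max IH ?orbT.
Qed.

Lemma bigmax_attained (T : eqType) (s : seq T) (x0 : R) (F : T -> R) :
  \big[Num.max/x0]_(q <- s) F q = x0 \/
  exists2 p, p \in s & \big[Num.max/x0]_(q <- s) F q = F p.
Proof.
elim: s => [|a s IH]; first by left; rewrite big_nil.
rewrite big_cons; case: (leP (F a) (\big[Num.max/x0]_(q <- s) F q)) => h.
  case: IH => [->|[p hp ->]]; first by left.
  by right; exists p => //; rewrite in_cons hp orbT.
 right; exists a => //; exact: mem_head.
Qed.

End Max.

Section MaxP.
Variables (R : realType) (n : nat).

Lemma grid_mem K L : is_grid n K L -> (K, L) \in grid_pts n.
Proof.
move=> h; rewrite /grid_pts mem_filter; apply/andP; split; first exact: h.
apply: allpairs_f; rewrite /idx_range mem_iota; move: h; rewrite /is_grid /int_idx /half_idx; lia.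
Qed.

Lemma bnd_mem K L : is_bnd n K L -> (K, L) \in bnd_pts n.
Proof.
move=> h; rewrite /bnd_pts mem_filter; apply/andP; split; first exact: h.
apply: allpairs_f; rewrite /idx_range mem_iota; move: h; rewrite /is_bnd /int_idx; lia.
Qed.

Lemma grid_of_mem p : p \in grid_pts n -> is_grid n p.1 p.2.
Proof. by rewrite mem_filter => /andP []. Qed.

Lemma coord_odd i : (1 <= i)%N -> (i < n)%N -> 0 < Defs.coord R n i.*2.+1 < 1.
Proof.
move=> h1 h2; rewrite /Defs.coord /Defs.hh.
have -> : ((i.*2.+1)%:R / 2 - 2^-1 : R) = i%:R.
  by rewrite -addn1 -muln2 natrD natrM; field.
have n0 : (0 : R) < n%:R by rewrite ltr0n; lia.
have i0 : (0 : R) < i%:R by rewrite ltr0n; lia.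
have iN : (i%:R : R) < n%:R by rewrite ltr_nat.
apply/andP; split; first by apply: divr_gt0.
by rewrite -/(i%:R / n%:R) ltr_pdivrMr // mul1r.
Qed.

Lemma coord_even j : (1 <= j)%N -> (j <= n)%N -> 0 < Defs.coord R n j.*2 < 1.
Proof.
move=> h1 h2; rewrite /Defs.coord /Defs.hh.
have -> : ((j.*2)%:R / 2 - 2^-1 : R) = j%:R - 2^-1.
  by rewrite -muln2 natrM; field.
have n0 : (0 : R) < n%:R by rewrite ltr0n; lia.
have i0 : (1 : R) <= j%:R by rewrite ler1n; lia.
have iN : (j%:R : R) <= n%:R by rewrite ler_nat.
apply/andP; split; first by apply: divr_gt0 => //; lra.
by rewrite -/((j%:R - 2^-1) / n%:R) ltr_pdivrMr // mul1r; lra.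
Qed.

Lemma step_alg (k M uR uL d1 d2 d3 d4 uC r : R) : 0 < k <= 4 ->
  uR <= M -> uL <= M -> d1 <= M -> d3 <= M -> d4 <= M -> uC = M -> r <= 0 ->
  c1 k * uR + c2 k * uC + c3 k * uL + c4 k * (d1 + d2 + d3 + d4) = r ->
  M <= d2.
Proof.
move=> /andP [k0 k4] hR hL h1 h3 h4 hC hr E.
rewrite /c1 /c2 /c3 /c4 hC in E.
have p1 : 0 <= (1 - k / 4) * (M - uR) by apply: mulr_ge0; lra.
have p2 : 0 <= (1 - k / 4) * (M - uL) by apply: mulr_ge0; lra.
have p3 : 0 <= k / 4 * (M - d1) by apply: mulr_ge0; lra.
have p4 : 0 <= k / 4 * (M - d3) by apply: mulr_ge0; lra.
have p5 : 0 <= k / 4 * (M - d4) by apply: mulr_ge0; lra.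
have : k / 4 * (M - d2) <= 0 by lra.
rewrite pmulr_rle0; [lra | lra].
Qed.

Lemma maxp (k : R) (f g : R -> R -> R) (u : nat -> nat -> R) : (1 <= n)%N ->
  0 < k <= 4 -> (forall x y : R, 0 < x < 1 -> 0 < y < 1 -> f x y <= 0) ->
  seven_point n k f g u -> max_grid n u <= max_bnd n g.
Proof.
move=> n1 hk fneg [bc [eA eB]].
set M := max_grid n u; set B := max_bnd n g.
have uleM : forall K L, is_grid n K L -> u K L <= M.
  move=> K L h; rewrite /M /max_grid.
  exact: (@bigmax_ge R _ (grid_pts n) (u 2%N 1%N) (fun p => u p.1 p.2) (K, L) (grid_mem h)).
have QleB : forall K L, is_bnd n K L -> Qb n g K L <= B.
  move=> K L h; rewrite /B /max_bnd.
  exact: (@bigmax_ge R _ (bnd_pts n) (Qb n g 2%N 1%N) (fun p => Qb n g p.1 p.2) (K, L) (bnd_mem h)).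
have hh0 : 0 <= Defs.hh R n ^+ 2 / 2 by apply: divr_ge0 => //; apply: sqr_ge0.
have key : forall d K L, (n.*2.+2 <= K + d)%N -> is_grid n K L -> u K L = M -> M <= B.
  elim=> [|d IH] K L hd hg hu.
    by move: hd hg; rewrite addn0 /is_grid /int_idx /half_idx; lia.
  case/boolP: (is_bnd n K L) => hb; first by rewrite -hu bc //; exact: QleB.
  have := @grid_cases n K L hg; rewrite (negbTE hb) orbF => /orP [hA|hB].
    have [i eK] : exists i, K = i.*2.+1 by exists K./2; move: hA; rewrite /intA; lia.
    have [j eL] : exists j, L = j.*2 by exists L./2; move: hA; rewrite /intA; lia.
    subst K L.
    have hi : (1 <= i <= n.-1)%N by move: hA; rewrite /intA; lia.
    have hj : (1 <= j <= n)%N by move: hA; rewrite /intA; lia.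
    have E := eA i j hi hj.
    have hr : Defs.hh R n ^+ 2 / 2 * f (Defs.coord R n i.*2.+1) (Defs.coord R n j.*2) <= 0.
      apply: mulr_ge0_le0 => //; apply: fneg.
        by apply: coord_odd; lia.
      by apply: coord_even; lia.
    have gr : forall K L, is_grid n K L -> u K L <= M := uleM.
    have T : M <= u i.*2.+2 j.*2.+1.
      apply: (step_alg hk _ _ _ _ _ hu hr E); apply: gr;
        rewrite /is_grid /int_idx /half_idx; lia.
    apply: (IH i.*2.+2 j.*2.+1).
    - lia.
    - rewrite /is_grid /int_idx /half_idx; move: hA; rewrite /intA; lia.
    - apply/eqP; rewrite eq_le T uleM //.
      rewrite /is_grid /int_idx /half_idx; move: hA; rewrite /intA; lia.
  have [i eK] : exists i, K = i.*2 by exists K./2; move: hB; rewrite /intB; lia.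
  have [j eL] : exists j, L = j.*2.+1 by exists L./2; move: hB; rewrite /intB; lia.
  subst K L.
  have hi : (1 <= i <= n)%N by move: hB; rewrite /intB; lia.
  have hj : (1 <= j <= n.-1)%N by move: hB; rewrite /intB; lia.
  have E := eB i j hi hj.
  have hr : Defs.hh R n ^+ 2 / 2 * f (Defs.coord R n i.*2) (Defs.coord R n j.*2.+1) <= 0.
    apply: mulr_ge0_le0 => //; apply: fneg.
      by apply: coord_even; lia.
    by apply: coord_odd; lia.
  have gr : forall K L, is_grid n K L -> u K L <= M := uleM.
  have T : M <= u i.*2.+1 j.*2.+2.
    apply: (step_alg hk _ _ _ _ _ hu hr E); apply: gr;
      rewrite /is_grid /int_idx /half_idx; lia.
  apply: (IH i.*2.+1 j.*2.+2).
  - lia.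
  - rewrite /is_grid /int_idx /half_idx; move: hB; rewrite /intB; lia.
  - apply/eqP; rewrite eq_le T uleM //.
    rewrite /is_grid /int_idx /half_idx; move: hB; rewrite /intB; lia.
case: (@bigmax_attained R _ (grid_pts n) (u 2%N 1%N) (fun p => u p.1 p.2)) => [eM|[p hp eM]].
  apply: (key n.*2.+2 2%N 1%N) => //; first lia.
  rewrite /is_grid /int_idx /half_idx; lia.
apply: (key n.*2.+2 p.1 p.2) => //; first lia.
exact: grid_of_mem.
Qed.

End MaxP.

Section Five.
Variables (R : realType) (n : nat).

Lemma conv57 (h uR uC uL d1 d2 d3 d4 F : R) : h != 0 ->
  ((4 * uC - d1 - d2 - d3 - d4) / h ^+ 2 = 2^-1 * F) <->
  (c1 4 * uR + c2 4 * uC + c3 4 * uL + c4 4 * (d1 + d2 + d3 + d4) = h ^+ 2 / 2 * F).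
Proof.
move=> h0.
have -> : c1 4 * uR + c2 4 * uC + c3 4 * uL + c4 4 * (d1 + d2 + d3 + d4)
   = 4 * uC - d1 - d2 - d3 - d4 by rewrite /c1 /c2 /c3 /c4; field.
set X := (4 * uC - d1 - d2 - d3 - d4).
split => E.
  have -> : X = (X / h ^+ 2) * h ^+ 2 by field; rewrite ?expf_neq0.
  by rewrite E; field.
by rewrite E; field; rewrite ?expf_neq0.
Qed.

Lemma five_seven (f g : R -> R -> R) (u : nat -> nat -> R) : (1 <= n)%N ->
  five_point n f g u <-> seven_point n 4 f g u.
Proof.
move=> n1.
have h0 : Defs.hh R n != 0 by rewrite /Defs.hh invr_eq0 pnatr_eq0; lia.
split => [[bc [e1 e2]] | [bc [e1 e2]]]; split => //; split => i j hi hj.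
- by apply: (proj1 (@conv57 _ _ _ _ _ _ _ _ _ h0)); exact: e1.
- by apply: (proj1 (@conv57 _ _ _ _ _ _ _ _ _ h0)); exact: e2.
- by apply: (proj2 (@conv57 _ _ _ _ _ _ _ _ _ h0)); exact: e1.
- by apply: (proj2 (@conv57 _ _ _ _ _ _ _ _ _ h0)); exact: e2.
Qed.

End Five.

Local Open Scope classical_set_scope.
Local Open Scope ring_scope.

Theorem theorem5p2 (R : realType) (n : nat) (f g : R -> R -> R) :
  (2 <= n)%N ->
  {within @unit_square R, continuous (fun p : R * R => f p.1 p.2)} ->
  (@lebesgue_measure R).-integrable `[0, 1] (fun s => (g s 0)%:E) ->
  (@lebesgue_measure R).-integrable `[0, 1] (fun s => (g s 1)%:E) ->
  (@lebesgue_measure R).-integrable `[0, 1] (fun s => (g 0 s)%:E) ->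
  (@lebesgue_measure R).-integrable `[0, 1] (fun s => (g 1 s)%:E) ->
  (forall kappa : R, 0 < kappa -> unique_grid_sol n (seven_point n kappa f g)) /\
  unique_grid_sol n (five_point n f g) /\
  ((forall x y : R, 0 < x < 1 -> 0 < y < 1 -> f x y <= 0) ->
     (forall kappa : R, 0 < kappa <= 4 -> forall u, seven_point n kappa f g u ->
        max_grid n u <= max_bnd n g) /\
     (forall u, five_point n f g u -> max_grid n u <= max_bnd n g)).
Proof.
move=> n2 _ _ _ _ _.
have n1 : (1 <= n)%N by lia.
split; first by move=> k k0; exact: (@seven_unique R n k f g k0).
split.
  have [u [hu uq]] := @seven_unique R n 4 f g (ltr0Sn _ 3).
  exists u; split; first by apply/(five_seven _ _ _ n1).
  by move=> v hv; apply: uq; apply/(five_seven _ _ _ n1).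
move=> fneg; split.
  by move=> k hk u hu; exact: (maxp n1 hk fneg hu).
move=> u hu; apply: (maxp (k := 4) n1 _ fneg); first by rewrite (ltr0Sn _ 3) lexx.
by apply/(five_seven _ _ _ n1).
Qed.
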